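(* Let $w \in \mathfrak{S}_n$ and let $\mathbf{2}$ denote the two-element chain. Then $w$ is a prism if and only if there exists a permutation $v \prec w$ (strictly below $w$ in the Bruhat order) with $\textsf{supp}(v) \subsetneq \textsf{supp}(w)$ and $B(w) \cong \mathbf{2} \times B(v)$ as posets. Moreover, for such $v$, one has $\textsf{supp}(w) \setminus \textsf{supp}(v) = \{i\}$ for some $i$, and $v$ is obtained by deleting a copy of the letter $i$ from a reduced word of $w$ (i.e., some reduced word of $v$ is obtained from some reduced word of $w$ by deleting one occurrence of $i$).
   Context: For $1 \le i \le n-1$, $\sigma_i \in \mathfrak{S}_n$ is the simple transposition swapping $i$ and $i+1$; products of permutations are compositions of maps. The length $\ell(w)$ is the minimal number of simple transpositions whose product is $w$. A reduced word of $w$ is a word $i_1 i_2 \cdots i_{\ell(w)}$ with $w = \sigma_{i_1}\cdots\sigma_{i_{\ell(w)}}$; $R(w)$ is the set of reduced words of $w$. The support $\textsf{supp}(w)$ is the set of letters appearing in a reduced word of $w$ (this is independent of the reduced word). The Bruhat order on $\mathfrak{S}_n$: $v \preceq w$ iff some reduced word of $v$ is a subword of some reduced word of $w$; $B(w) = \{v : v \preceq w\}$ is the principal order ideal. A permutation $w$ is a prism if $B(w) \cong B \times X$ for some poset $X$ and some nontrivial boolean algebra $B$ (equivalently, $B(w) \cong \mathbf{2} \times X$ for some poset $X$). *)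

(* Defs.v *)
From HB Require Import structures.
From mathcomp Require Import all_boot all_order all_fingroup.
Set Implicit Arguments. Unset Strict Implicit. Unset Printing Implicit Defensive.
Import Order.TTheory.

(* Letters are natural numbers i with 1 <= i <= n-1 (paper's indexing).
   The paper's point i in {1..n} is the ordinal i-1 of 'I_n. *)

(* simple transposition sigma_i : swaps the points i and i+1 (paper),
   i.e. the ordinals i-1 and i.  Only meaningful for 1 <= i <= n-1. *)
Definition stransp (n : nat) : nat -> 'S_n :=
  match n return nat -> 'S_n with
  | 0 => fun _ => 1%g
  | m.+1 => fun i => tperm (inord i.-1 : 'I_m.+1) (inord i)
  end.

Definition is_word (n : nat) (u : seq nat) : bool := all (fun i => 0 < i < n) u.

(* product sigma_{i1} o ... o sigma_{ik} as composition of maps.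
   In MathComp, (s * t) x = t (s x), so composition s o t is t * s. *)
Definition word_perm (n : nat) (u : seq nat) : 'S_n :=
  \prod_(i <- rev u) stransp n i.

Definition reduced_word (n : nat) (w : 'S_n) (u : seq nat) : Prop :=
  is_word n u /\ word_perm n u = w /\
  forall u', is_word n u' -> word_perm n u' = w -> size u <= size u'.

Definition supp (n : nat) (w : 'S_n) (i : nat) : Prop :=
  exists2 u, reduced_word w u & i \in u.

Definition bruhat_le (n : nat) (v w : 'S_n) : Prop :=
  exists u, exists u', [/\ reduced_word v u, reduced_word w u' & subseq u u'].

Definition bruhat_lt (n : nat) (v w : 'S_n) : Prop := v <> w /\ bruhat_le v w.

Definition Bideal (n : nat) (w : 'S_n) : Type := {v : 'S_n | bruhat_le v w}.
Definition Bideal_le (n : nat) (w : 'S_n) (x y : Bideal w) : Prop :=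
  bruhat_le (proj1_sig x) (proj1_sig y).

Definition order_iso (A B : Type) (leA : A -> A -> Prop) (leB : B -> B -> Prop)
  : Prop :=
  exists f : A -> B, bijective f /\ forall x y, leA x y <-> leB (f x) (f y).

Definition prod_le (A B : Type) (leA : A -> A -> Prop) (leB : B -> B -> Prop)
  (p q : A * B) : Prop := leA p.1 q.1 /\ leB p.2 q.2.

Definition chain2_le (a b : bool) : Prop := a ==> b.

(* prism: B(w) ~ B x X, B a nontrivial boolean algebra
   (complemented distributive lattice with top and bottom, \bot <> \top),
   X a poset *)
Definition prism (n : nat) (w : 'S_n) : Prop :=
  exists (d : Order.disp_t) (B : ctbDistrLatticeType d)
         (d' : Order.disp_t) (X : porderType d'),
    (Order.bottom : B) <> Order.top /\
    order_iso (@Bideal_le n w)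
      (prod_le (fun a b : B => (a <= b)%O) (fun a b : X => (a <= b)%O)).

(* Main.v *)
Require Import Defs.
From mathcomp Require Import all_boot all_order all_fingroup.
From HB Require Import structures.
From mathcomp Require Import zify boolp.
From Stdlib Require Import Classical.
Set Implicit Arguments. Unset Strict Implicit. Unset Printing Implicit Defensive.

Section Cox.
Variable n : nat.
Local Notation perm := ('S_n).
Local Notation wp := (@word_perm n).

Lemma stranspE c : 0 < c < n -> exists a b : 'I_n,
  [/\ (a : nat) = c.-1, (b : nat) = c & stransp n c = tperm a b].
Proof.
case: n => [|m] /=; first lia.
move=> Hc; exists (inord c.-1), (inord c); rewrite !inordK //; lia.
Qed.

Lemma wp_nil : wp [::] = 1%g.
Proof. by rewrite /word_perm big_nil. Qed.

Lemma wp_cat u v : wp (u ++ v) = (wp v * wp u)%g.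
Proof. by rewrite /word_perm rev_cat big_cat. Qed.

Lemma wp_rcons u c : wp (rcons u c) = (stransp n c * wp u)%g.
Proof. by rewrite -cats1 wp_cat /word_perm /= big_cons big_nil mulg1. Qed.

Lemma wp_cons c u : wp (c :: u) = (wp u * stransp n c)%g.
Proof. by rewrite -cat1s wp_cat /word_perm /= big_cons big_nil mulg1. Qed.

Lemma is_word_cat u v : is_word n (u ++ v) = is_word n u && is_word n v.
Proof. by rewrite /is_word all_cat. Qed.

Lemma is_word_rcons u c : is_word n (rcons u c) = is_word n u && (0 < c < n).
Proof. by rewrite -cats1 is_word_cat /is_word /= andbT. Qed.

Lemma is_word_subseq t u : subseq t u -> is_word n u -> is_word n t.
Proof.
move=> Hs /allP H; apply/allP => x Hx; apply: H; exact: (mem_subseq Hs).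
Qed.

Lemma tpermD' (T : finType) (x y z : T) : z != x -> z != y -> tperm x y z = z.
Proof. by move=> H1 H2; rewrite tpermD // eq_sym. Qed.

Lemma adj_lt (a b p q : 'I_n) : (b : nat) = (a : nat).+1 -> p < q -> ~ (p = a /\ q = b) ->
  tperm a b p < tperm a b q.
Proof.
move=> Hab Hpq Hne.
have Hne' : ~ ((p : nat) = a /\ (q : nat) = b).
  by case=> /val_inj H1 /val_inj H2; apply: Hne.
clear Hne.
case: (eqVneq p a) => [Epa|Hpa]; [rewrite Epa tpermL|case: (eqVneq p b) => [Epb|Hpb];
  [rewrite Epb tpermR|rewrite tpermD' //]];
(case: (eqVneq q a) => [Eqa|Hqa]; [rewrite Eqa tpermL|case: (eqVneq q b) => [Eqb|Hqb];
  [rewrite Eqb tpermR|rewrite tpermD' //]]);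
repeat match goal with H : is_true (_ != _) |- _ => move: H; rewrite -val_eqE /= => /eqP H end;
repeat match goal with H : @eq _ ?x ?y |- _ => 
  let H' := fresh in have H' := congr1 (@nat_of_ord n) H; clear H; simpl in H' end;
try (exfalso; apply: Hne'; split; lia); lia.

Qed.

Lemma tperm_conj_mul (a b p q : 'I_n) :
  (tperm p q * tperm a b = tperm a b * tperm (tperm a b p) (tperm a b q))%g.
Proof.
by rewrite -tpermJ /conjg !mulgA mulgV mul1g.
Qed.

Lemma strong_exchange u : is_word n u -> forall p q : 'I_n, p < q ->
  wp u q < wp u p ->
  exists u1 c u2, u = u1 ++ c :: u2 /\ (tperm p q * wp u = wp (u1 ++ u2))%g.
Proof.
elim/last_ind: u => [|u0 c IH].
  by move=> _ p q Hpq; rewrite wp_nil !perm1 ltnNge ltnW.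
rewrite is_word_rcons => /andP [Hw Hc] p q Hpq.
have [a [b [Ha Hb Hs]]] := stranspE Hc.
rewrite wp_rcons Hs !permM => Hlt.
have Hab : (b : nat) = (a : nat).+1 by move/andP: Hc => [? ?]; lia.
case: (boolP ((p == a) && (q == b))) => [/andP[/eqP Hpa /eqP Hqb]|Hne].
  subst p q; exists u0, c, [::]; split; first by rewrite cats1.
  by rewrite cats0 mulgA tperm2 mul1g.
have Hne' : ~ (p = a /\ q = b) by case=> Hp Hq; move: Hne; rewrite Hp Hq !eqxx.
have Hlt' := adj_lt Hab Hpq Hne'.
have [u1 [c' [u2 [E1 E2]]]] := IH Hw _ _ Hlt' Hlt.
exists u1, c', (rcons u2 c); split; first by rewrite E1 rcons_cat.
by rewrite -rcons_cat wp_rcons -E2 Hs !mulgA tperm_conj_mul.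
Qed.

Definition ninv (y : perm) : nat :=
  \sum_(i : 'I_n) \sum_(j : 'I_n) ((i < j) && (y j < y i)).

Lemma adj_lt_eq (a b p q : 'I_n) : (b : nat) = (a : nat).+1 ->
  ~ (p = a /\ q = b) -> ~ (p = b /\ q = a) ->
  (tperm a b p < tperm a b q) = (p < q).
Proof.
move=> Hab H1 H2.
case: (ltngtP p q) => Hpq.
- exact: adj_lt.
- apply/negbTE; rewrite -leqNgt; apply: ltnW; apply: adj_lt => //.
  by case=> ? ?; apply: H2.
- by rewrite (val_inj Hpq) ltnn.
Qed.

Lemma inv_swap (a b : 'I_n) (y : perm) : (b : nat) = (a : nat).+1 ->
  ninv (tperm a b * y) + (y b < y a) = ninv y + (y a < y b).
Proof.
move=> Hab.
set s := tperm a b.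
have Hinj : injective s by exact: perm_inj.
have E : ninv (s * y) = \sum_(i : 'I_n) \sum_(j : 'I_n) ((s i < s j) && (y j < y i)).
  rewrite /ninv (reindex_inj Hinj) /=; apply: eq_bigr => i _.
  rewrite (reindex_inj Hinj) /=; apply: eq_bigr => j _.
  by rewrite !permM !tpermK.
have Hab' : a != b by rewrite -val_eqE /= Hab; lia.
rewrite E /ninv !pair_bigA /=.
rewrite (bigD1 (a, b)) //= (bigD1 (b, a)) //=; last by rewrite xpair_eqE negb_and Hab' orbT.
rewrite [in RHS](bigD1 (a, b)) //= [in RHS](bigD1 (b, a)) //=; last by rewrite xpair_eqE negb_and Hab' orbT.
rewrite /s tpermL tpermR.
have -> : \sum_(i | (i != (a, b)) && (i != (b, a)))
      ((tperm a b i.1 < tperm a b i.2) && (y i.2 < y i.1)) =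
    \sum_(i | (i != (a, b)) && (i != (b, a))) ((i.1 < i.2) && (y i.2 < y i.1)).
  apply: eq_bigr => [[p q]] /andP [H1 H2] /=.
  rewrite adj_lt_eq //.
  - by case=> Hp Hq; move: H1; rewrite Hp Hq eqxx.
  - by case=> Hp Hq; move: H2; rewrite Hp Hq eqxx.
have -> : (a < b) = true by apply/idP; lia.
have -> : (b < a) = false by apply/negbTE; lia.
rewrite /=; move: (\sum_(i | _) _) => S.
by case: (y a < y b); case: (y b < y a); rewrite /=; lia.
Qed.

Lemma ninv1 : ninv 1 = 0.
Proof.
rewrite /ninv big1 // => i _; rewrite big1 // => j _; rewrite !perm1.
by case: ltngtP.
Qed.

Lemma stransp_ab (a b : 'I_n) : (b : nat) = (a : nat).+1 -> stransp n b = tperm a b.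
Proof.
move=> Hab; have Hc : 0 < b < n by rewrite ltn_ord Hab.
have [a' [b' [Ha' Hb' ->]]] := stranspE Hc.
have -> : a' = a by apply: val_inj; rewrite /= Ha' Hab.
by have -> : b' = b by apply: val_inj; rewrite /= Hb'.
Qed.

Lemma inv_le_size u : is_word n u -> ninv (wp u) <= size u.
Proof.
elim/last_ind: u => [|u0 c IH]; first by rewrite wp_nil ninv1.
rewrite is_word_rcons size_rcons wp_rcons => /andP [Hw Hc].
have [a [b [Ha Hb ->]]] := stranspE Hc.
have Hab : (b : nat) = (a : nat).+1 by move/andP: Hc => [? ?]; lia.
have := inv_swap (wp u0) Hab; have := IH Hw.
move: (ninv (tperm a b * wp u0)) => X.
by case: (wp u0 a < wp u0 b); case: (wp u0 b < wp u0 a); rewrite /=; lia.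
Qed.

Lemma no_descent (y : perm) :
  (forall a b : 'I_n, (b : nat) = (a : nat).+1 -> y a <= y b) -> y = 1%g.
Proof.
move=> H; apply/permP => i; rewrite perm1.
case: n y i H => [|m] y i H; first by case: i.
pose g k := (y (inord k) : nat).
have Hg : forall k, k < m -> g k < g k.+1.
  move=> k Hk; have Hab : ((inord k.+1 : 'I_m.+1) : nat) = (inord k : 'I_m.+1).+1.
    by rewrite !inordK //; lia.
  have := H _ _ Hab; rewrite /g leq_eqVlt => /orP [/eqP E|//].
  have /perm_inj E' : y (inord k) = y (inord k.+1) by apply: val_inj.
  by move: (congr1 (@nat_of_ord _) E'); rewrite !inordK //; lia.
have C1 : forall i j, i <= j <= m -> g i + (j - i) <= g j.
  move=> i' j; elim: j => [|j IH] Hj; first by (have -> : i' = 0 by lia); rewrite subnn addn0.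
  case: (ltngtP i' j.+1) => Hij; last by rewrite Hij subnn addn0.
    have := IH ltac:(lia); have := Hg j ltac:(lia); lia.
  lia.
have Hbd : forall k, g k <= m by move=> k; rewrite /g -ltnS ltn_ord.
have Hi := ltn_ord i.
have E1 := C1 0 i ltac:(lia). have E2 := C1 i m ltac:(lia). have E3 := Hbd m.
apply: val_inj => /=.
have : g i = i by lia.
by rewrite /g inord_val.
Qed.

Lemma descent_exists (y : perm) : y <> 1%g ->
  exists a b : 'I_n, (b : nat) = (a : nat).+1 /\ y b < y a.
Proof.
move=> Hy; apply: NNPP => Hn; apply: Hy; apply: no_descent => a b Hab.
rewrite leqNgt; apply/negP => Hlt; apply: Hn; by exists a, b.
Qed.

Lemma generation k : forall y : perm, ninv y = k ->
  exists u, [/\ is_word n u, wp u = y & size u = k].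
Proof.
elim/ltn_ind: k => k IH y Hk.
case: (eqVneq y 1%g) => [Ey|Hy].
  by exists [::]; rewrite wp_nil -Hk Ey ninv1.
have [a [b [Hab Hlt]]] := descent_exists (elimN eqP Hy).
have Hs := inv_swap y Hab.
have Hlt' : (y a < y b) = false by apply/negbTE; rewrite -leqNgt ltnW.
rewrite Hlt Hlt' addn0 in Hs.
have Hm : ninv (tperm a b * y) < k by rewrite -Hk -Hs addn1.
have [u' [Hw' Hp' Hs']] := IH _ Hm _ (erefl _).
exists (rcons u' b); split.
- by rewrite is_word_rcons Hw' /=; have := ltn_ord b; lia.
- by rewrite wp_rcons Hp' (stransp_ab Hab) mulgA tperm2 mul1g.
- by rewrite size_rcons Hs' -Hk -Hs addn1.
Qed.

Lemma reducedP (y : perm) u :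
  reduced_word y u <-> [/\ is_word n u, wp u = y & size u = ninv y].
Proof.
split.
- case=> Hw [Hp Hmin]; split => //.
  have [u' [Hw' Hp' Hs']] := generation (erefl (ninv y)).
  have := Hmin u' Hw' Hp'; have := inv_le_size Hw; rewrite Hp; lia.
- case=> Hw Hp Hs; split => //; split => // u' Hw' Hp'.
  by rewrite Hs -Hp'; exact: inv_le_size.
Qed.

Lemma exists_reduced (y : perm) : exists u, reduced_word y u.
Proof.
have [u [Hw Hp Hs]] := generation (erefl (ninv y)).
by exists u; apply/reducedP.
Qed.

Lemma red_rcons u0 c : reduced_word (wp (rcons u0 c)) (rcons u0 c) ->
  exists a b : 'I_n, [/\ (a : nat) = c.-1, (b : nat) = c, stransp n c = tperm a b,
     wp u0 a < wp u0 b & reduced_word (wp u0) u0].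
Proof.
move/reducedP => [Hw _ Hs]; move: Hw Hs.
rewrite is_word_rcons size_rcons wp_rcons => /andP [Hw Hc].
have [a [b [Ha Hb Est]]] := stranspE Hc.
have Hab : (b : nat) = (a : nat).+1 by move/andP: Hc => [? ?]; lia.
rewrite Est => Hs; exists a, b; split => //.

- have := inv_swap (wp u0) Hab; have := inv_le_size Hw.
  move: Hs; move: (ninv (tperm a b * wp u0)) => X.
  by case: (wp u0 a < wp u0 b); case: (wp u0 b < wp u0 a); rewrite /=; lia.
- apply/reducedP; split => //.
  have := inv_swap (wp u0) Hab; have := inv_le_size Hw.
  move: Hs; move: (ninv (tperm a b * wp u0)) => X.
  by case: (wp u0 a < wp u0 b); case: (wp u0 b < wp u0 a); rewrite /=; lia.
Qed.

Lemma asc_or_desc u : is_word n u -> ninv (wp u) = size u \/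
  exists u1 c u2 (a b : 'I_n), [/\ u = u1 ++ c :: u2, (b : nat) = (a : nat).+1,
    stransp n c = tperm a b & wp u1 b < wp u1 a].
Proof.
elim/last_ind: u => [|u0 c IH]; first by left; rewrite wp_nil ninv1.
rewrite is_word_rcons => /andP [Hw Hc].
case: (IH Hw) => [Hi|[u1 [c' [u2 [a [b [E Hab Hs Hl]]]]]]]; last first.
  by right; exists u1, c', (rcons u2 c), a, b; split => //; rewrite E rcons_cat.
have [a [b [Ha Hb Est]]] := stranspE Hc.
have Hab : (b : nat) = (a : nat).+1 by move/andP: Hc => [? ?]; lia.
case: (boolP (wp u0 b < wp u0 a)) => Hd.
  by right; exists u0, c, [::], a, b; split => //; rewrite cats1.
left; rewrite wp_rcons size_rcons Est.
have Hne : wp u0 a != wp u0 b.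
  apply/eqP => /perm_inj E; move: Hab; rewrite E; lia.
have Ha' : wp u0 a < wp u0 b.
  by rewrite ltn_neqAle leqNgt Hd andbT; move: Hne; rewrite -val_eqE.
have := inv_swap (wp u0) Hab; rewrite Ha' (negbTE Hd) Hi.
move: (ninv (tperm a b * wp u0)) => X /=; lia.
Qed.

Lemma reduced_subword u : is_word n u -> exists t, subseq t u /\ reduced_word (wp u) t.
Proof.
move=> Hw; move: {2}(size u) (leqnn (size u)) => k; elim: k u Hw => [|k IH] u Hw Hk.
  case: (asc_or_desc Hw) => [Hi|[u1 [c [u2 [a [b [E _ _ _]]]]]]].
    by exists u; split => //; apply/reducedP.
  by move: Hk; rewrite E size_cat /= addnS.
case: (asc_or_desc Hw) => [Hi|[u1 [c [u2 [a [b [E Hab Hs Hl]]]]]]].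
  by exists u; split => //; apply/reducedP.
have Hw1 : is_word n u1 by move: Hw; rewrite E is_word_cat => /andP [].
have Hab' : a < b by rewrite Hab.
have [v1 [d [v2 [E1 E2]]]] := strong_exchange Hw1 Hab' Hl.
have Hsub : subseq ((v1 ++ v2) ++ u2) u.
  rewrite E E1; apply: cat_subseq; last exact: subseq_cons.
  by apply: cat_subseq => //; exact: subseq_cons.
have Hw' := is_word_subseq Hsub Hw.
have Hsz : size ((v1 ++ v2) ++ u2) <= k.
  move: Hk; rewrite E E1 !size_cat /=; lia.
have [t [Ht Hr]] := IH _ Hw' Hsz.
exists t; split; first exact: subseq_trans Ht Hsub.
have -> : wp u = wp ((v1 ++ v2) ++ u2).
  by rewrite E wp_cat wp_cons wp_cat -E2 Hs !mulgA.
exact: Hr.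
Qed.

Inductive R : perm -> perm -> Prop :=
| Rrefl (x : perm) : R x x
| Rstep (x : perm) (p q : 'I_n) (z : perm) : p < q -> x p < x q -> R (tperm p q * x)%g z -> R x z.

Lemma R_trans x y z : R x y -> R y z -> R x z.
Proof.
elim=> [//|x' p q z' Hpq Hx _ IH] Hz.
exact: (Rstep Hpq Hx (IH Hz)).
Qed.

Lemma R_up (z : perm) (a b : 'I_n) : a < b -> z a < z b -> R z (tperm a b * z).
Proof. by move=> H1 H2; apply: (Rstep H1 H2); exact: Rrefl. Qed.

Lemma tperm_conj_mul' (a b p q : 'I_n) :
  (tperm (tperm a b p) (tperm a b q) * tperm a b = tperm a b * tperm p q)%g.
Proof.
have E := tperm_conj_mul a b p q.
have -> : tperm (tperm a b p) (tperm a b q) = (tperm a b * tperm p q * tperm a b)%g.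
  by rewrite -mulgA E mulgA tperm2 mul1g.
by rewrite -mulgA tperm2 mulg1.
Qed.

Lemma lift_R x w : R x w -> forall a b : 'I_n, (b : nat) = (a : nat).+1 ->
  w a < w b -> R (tperm a b * x) (tperm a b * w).
Proof.
elim=> [x' a b _ _|x' p q z Hpq Hx HR IH a b Hab Hz]; first exact: Rrefl.
have Hlt : a < b by rewrite Hab.
have Hup : R z (tperm a b * z) by exact: R_up.
have Hne : x' a != x' b.
  by apply/eqP => /perm_inj E; move: Hab; rewrite E; lia.
case: (ltngtP (x' a) (x' b)) => Hc; last by move/eqP: Hne; case; apply: val_inj.
- case: (boolP ((p == a) && (q == b))) => [/andP [/eqP Ep /eqP Eq]|Hpq'].
    by subst p q; exact: R_trans HR Hup.
  have Hne' : ~ (p = a /\ q = b) by case=> E1 E2; move: Hpq'; rewrite E1 E2 !eqxx.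
  apply: (Rstep (adj_lt Hab Hpq Hne')).
    by rewrite !permM !tpermK.
  rewrite mulgA tperm_conj_mul' -mulgA; exact: IH.
- have H1 : R (tperm a b * x') x'.
    apply: (Rstep Hlt); first by rewrite !permM tpermL tpermR.
    rewrite mulgA tperm2 mul1g; exact: Rrefl.
  exact: R_trans H1 (R_trans (Rstep Hpq Hx HR) Hup).
Qed.

Lemma subseq_rcons_inv (t u : seq nat) c : subseq t (rcons u c) ->
  subseq t u \/ exists t0, t = rcons t0 c /\ subseq t0 u.
Proof.
rewrite -subseq_rev rev_rcons.
case E: (rev t) => [|d r] /=.
  move=> _; have Ht : t = [::] by rewrite -(revK t) E.
  by left; rewrite Ht sub0seq.
case: (eqVneq d c) => [Edc|Hne] H.
  right; exists (rev r); split; last by rewrite -subseq_rev revK.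
  by rewrite -(revK t) E Edc rev_cons.
by left; rewrite -subseq_rev E.
Qed.

Lemma subword_R u : reduced_word (wp u) u ->
  forall t, subseq t u -> reduced_word (wp t) t -> R (wp t) (wp u).
Proof.
elim/last_ind: u => [|u0 c IH] Hu t Ht Hr.
  by move: Ht; rewrite subseq0 => /eqP ->; exact: Rrefl.
have [a [b [Ha Hb Est Hasc Hu0]]] := red_rcons Hu.
have Hab : (b : nat) = (a : nat).+1.
  have : 0 < c by move/reducedP: Hu => [Hw _ _]; move: Hw; rewrite is_word_rcons => /andP [_ /andP []].
  lia.
case: (subseq_rcons_inv Ht) => [Ht0|[t0 [Et Ht0]]].
  apply: R_trans (IH Hu0 _ Ht0 Hr) _.
  rewrite wp_rcons Est; apply: R_up => //; by rewrite Hab.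
subst t.
have [a' [b' [Ha' Hb' Est' Hasc' Ht0r]]] := red_rcons Hr.
have Ea : a' = a by apply: val_inj; rewrite /= Ha Ha'.
have Eb : b' = b by apply: val_inj; rewrite /= Hb Hb'.
subst a' b'.
rewrite !wp_rcons Est; apply: lift_R => //.
exact: IH.
Qed.

Lemma R_subword x y : R x y -> forall u, is_word n u -> wp u = y ->
  exists t, subseq t u /\ wp t = x.
Proof.
elim=> [x' u _ Hu|x' p q z Hpq Hx _ IH u Hw Hu]; first by exists u.
have [t [Ht Hwt]] := IH u Hw Hu.
have Hw' := is_word_subseq Ht Hw.
have Hl : wp t q < wp t p by rewrite Hwt !permM tpermL tpermR.
have [t1 [d [t2 [E1 E2]]]] := strong_exchange Hw' Hpq Hl.
exists (t1 ++ t2); split.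
  apply: subseq_trans Ht; rewrite E1; apply: cat_subseq => //; exact: subseq_cons.
by rewrite -E2 Hwt mulgA tperm2 mul1g.
Qed.

Lemma bruhat_leP (x w : perm) : bruhat_le x w <-> R x w.
Proof.
split.
- case=> u [u' [Hu Hu' Hs]].
  have [_ Ex _] := (iffLR (reducedP _ _)) Hu.
  have [_ Ew _] := (iffLR (reducedP _ _)) Hu'.
  rewrite -Ex -Ew; apply: subword_R; by rewrite ?Ex ?Ew.
- move=> HR; have [u' Hu'] := exists_reduced w.
  have [Hw Ew _] := (iffLR (reducedP _ _)) Hu'.
  have [t [Ht Et]] := R_subword HR Hw Ew.
  have [t' [Ht' Hr]] := reduced_subword (is_word_subseq Ht Hw).
  exists t', u'; split => //; first by rewrite -Et.
  exact: subseq_trans Ht' Ht.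
Qed.

Lemma bruhat_le_trans (x y z : perm) : bruhat_le x y -> bruhat_le y z -> bruhat_le x z.
Proof. move=> /bruhat_leP H1 /bruhat_leP H2; apply/bruhat_leP; exact: R_trans H1 H2. Qed.

Lemma bruhat_le_refl (x : perm) : bruhat_le x x.
Proof. have [u Hu] := exists_reduced x; exists u, u; split => //. Qed.

Lemma bruhat_le_inv (x w : perm) : bruhat_le x w -> ninv x <= ninv w ?= iff (x == w).
Proof.
case=> u [u' [Hu Hu' Hs]].
have [_ Ex Sx] := (iffLR (reducedP _ _)) Hu.
have [_ Ew Sw] := (iffLR (reducedP _ _)) Hu'.
have := size_subseq_leqif Hs; rewrite Sx Sw => -[L E].
split => //; rewrite E.
apply/eqP/eqP => [Euu|Exw]; first by rewrite -Ex -Ew Euu.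
by apply/eqP; rewrite -E Exw eqxx.
Qed.

Lemma bruhat_le_antisym (x w : perm) : bruhat_le x w -> bruhat_le w x -> x = w.
Proof.
move=> H1 H2; have := bruhat_le_inv H1; have := bruhat_le_inv H2.
move=> [L2 _] [_ E1]; apply/eqP; rewrite -E1 eqn_leq L2 andbT.
by case: (bruhat_le_inv H1).
Qed.

Lemma bruhat_lt_inv (x w : perm) : bruhat_le x w -> x <> w -> ninv x < ninv w.
Proof.
move=> H Hne; have [L E] := bruhat_le_inv H.
rewrite ltn_neqAle L andbT E; exact/eqP.
Qed.

Lemma bruhat_le_1 (w : perm) : bruhat_le 1%g w.
Proof.
have [u Hu] := exists_reduced w; exists [::], u; split => //.
apply/reducedP; split => //; first by rewrite wp_nil.
symmetry; exact: ninv1.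
exact: sub0seq.
Qed.

Lemma inv_stransp i : 0 < i < n -> ninv (stransp n i) = 1.
Proof.
move=> Hi; have [a [b [Ha Hb ->]]] := stranspE Hi.
have Hab : (b : nat) = (a : nat).+1 by move/andP: Hi => [? ?]; lia.
have := inv_swap 1%g Hab; rewrite mulg1 !perm1 ninv1 Hab ltnSn.
by rewrite ltnNge leqnSn /= addn0.
Qed.

Lemma reduced_stransp i : 0 < i < n -> reduced_word (stransp n i) [:: i].
Proof.
move=> Hi; apply/reducedP; split; first by rewrite /is_word /= Hi.
  by rewrite /word_perm /= big_cons big_nil mulg1.
by rewrite inv_stransp.
Qed.

Lemma tperm_moved (T : finType) (a' b' x : T) : tperm a' b' x != x -> x = a' \/ x = b'.
Proof.
case: (eqVneq x a') => [->|H1]; first by left.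
case: (eqVneq x b') => [->|H2]; first by right.
by rewrite tpermD' // eqxx.
Qed.

Lemma stransp_inj i k : 0 < i < n -> 0 < k < n -> stransp n k = stransp n i -> k = i.
Proof.
move=> Hi Hk; have [a [b [Ha Hb ->]]] := stranspE Hi.
have [a' [b' [Ha' Hb' ->]]] := stranspE Hk.
move=> E.
have Hab : (b : nat) = (a : nat).+1 by move/andP: Hi => [? ?]; lia.
have Hab' : (b' : nat) = (a' : nat).+1 by move/andP: Hk => [? ?]; lia.
have Hna : tperm a' b' a != a.
  rewrite E tpermL -val_eqE /=; apply/eqP; lia.
have Hnb : tperm a' b' b != b.
  rewrite E tpermR -val_eqE /=; apply/eqP; lia.
case: (tperm_moved Hna) => Ea; case: (tperm_moved Hnb) => Eb;
  move: (congr1 (@nat_of_ord n) Ea) (congr1 (@nat_of_ord n) Eb) => /= ? ?; lia.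
Qed.

Lemma reduced_stransp_uniq i t : 0 < i < n -> reduced_word (stransp n i) t -> t = [:: i].
Proof.
move=> Hi /reducedP [Hw Hp Hs]; rewrite inv_stransp // in Hs.
case: t Hw Hp Hs => [|k [|//]] //= Hw Hp _.
have Hk : 0 < k < n by move: Hw; rewrite /is_word /= andbT.
move: Hp; rewrite /word_perm /= big_cons big_nil mulg1 => Hp.
by rewrite (stransp_inj Hi Hk Hp).
Qed.

Lemma supp_valid (y : perm) i : supp y i -> 0 < i < n.
Proof. by case=> u /reducedP [/allP Hw _ _] /Hw. Qed.

Lemma suppP (y : perm) i : supp y i <-> (0 < i < n /\ bruhat_le (stransp n i) y).
Proof.
split.
- move=> Hs; have Hi := supp_valid Hs; split => //.
  case: Hs => u Hu Hin; exists [:: i], u; split => //; first exact: reduced_stransp.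
  by rewrite sub1seq.
- case=> Hi [t [u [Ht Hu Hs]]]; exists u => //.
  rewrite (reduced_stransp_uniq Hi Ht) sub1seq in Hs; exact: Hs.
Qed.

Lemma supp_in (y : perm) i u : supp y i -> reduced_word y u -> i \in u.
Proof.
move=> /suppP [Hi /bruhat_leP HR] Hu.
have [Hw Ew _] := (iffLR (reducedP _ _)) Hu.
have [t [Ht Et]] := R_subword HR Hw Ew.
have [t' [Ht' Hr]] := reduced_subword (is_word_subseq Ht Hw).
rewrite Et in Hr; rewrite (reduced_stransp_uniq Hi Hr) sub1seq in Ht'.
exact: (mem_subseq Ht).
Qed.
End Cox.


Lemma sig_eqP (A : Type) (P : A -> Prop) (x y : {a : A | P a}) :
  proj1_sig x = proj1_sig y -> x = y.
Proof. apply: eq_sig_hprop => a p q; exact: Prop_irrelevance. Qed.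

Section Iso.
Variables (A B C : Type) (leA : A -> A -> Prop) (leB : B -> B -> Prop) (leC : C -> C -> Prop).

Lemma iso_sym : order_iso leA leB -> order_iso leB leA.
Proof.
case=> f [[g fg gf] H]; exists g; split; first by exists f.
by move=> x y; rewrite H !gf.
Qed.

Lemma iso_trans : order_iso leA leB -> order_iso leB leC -> order_iso leA leC.
Proof.
case=> f [[g fg gf] H1] [h [[k hk kh] H2]]; exists (h \o f); split.
  by exists (g \o k) => x /=; rewrite ?hk ?fg ?kh ?gf.
by move=> x y; rewrite H1 H2.
Qed.

Lemma iso_chain (f : A -> B) (r : B -> nat) :
  injective f -> (forall x y, leA x y -> leB (f x) (f y)) ->
  (forall x y, leB x y -> x <> y -> r x < r y) ->
  forall (c : nat -> A) K, (forall k, k < K -> leA (c k) (c k.+1) /\ c k <> c k.+1) ->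
  r (f (c 0)) + K <= r (f (c K)).
Proof.
move=> Hi Hm Hs c; elim=> [|K IH] Hc; first by rewrite addn0.
have [H1 H2] := Hc K (ltnSn K).
have := Hs _ _ (Hm _ _ H1) (fun E => H2 (Hi _ _ E)).
have := IH (fun k Hk => Hc k (ltnW Hk)); lia.
Qed.
End Iso.

Lemma iso_inj (A B : Type) (f : A -> B) :
  bijective f -> injective f.
Proof. by case=> g fg _; exact: can_inj fg. Qed.

Lemma reduced_prefix n (y : 'S_n) u1 u2 : reduced_word y (u1 ++ u2) ->
  reduced_word (word_perm n u1) u1.
Proof.
case=> Hw [Hp Hmin]; move: Hw; rewrite is_word_cat => /andP [Hw1 Hw2].
split => //; split => // u' Hw' Hp'.
have := Hmin (u' ++ u2); rewrite is_word_cat Hw' Hw2 size_cat wp_cat Hp' -wp_cat Hp.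
by move=> /(_ isT erefl); rewrite size_cat leq_add2r.
Qed.

Lemma subseq_one (T : eqType) (u u' : seq T) : subseq u u' -> size u' = (size u).+1 ->
  exists u1 c u2, u' = u1 ++ c :: u2 /\ u = u1 ++ u2.
Proof.
elim: u' u => [|d r IH] [|e s] //=.
- clear IH; case: r => [|x r'] _ H; first by exists [::], d, [::].
  by move: H => /= [].
- case: ifP => [/eqP Ed|Hne] Hs [Hsz].
    have [u1 [c [u2 [E1 E2]]]] := IH _ Hs Hsz.
    by exists (d :: u1), c, u2; rewrite E1 E2 Ed.
  have : size (e :: s) <= size r ?= iff (e :: s == r) := size_subseq_leqif Hs.
  case=> _; rewrite /= Hsz eqxx => /esym/eqP <-.
  by exists [::], d, (e :: s).
Qed.

Lemma reduced_size n (y : 'S_n) u : reduced_word y u -> size u = ninv y.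
Proof. by move=> /(iffLR (reducedP _ _)) []. Qed.

Lemma bideal_val_inj n (w : 'S_n) (x y : Bideal w) : proj1_sig x = proj1_sig y -> x = y.
Proof. exact: sig_eqP. Qed.

Section Prefix.
Variables (n : nat) (y : 'S_n) (u : seq nat).
Hypothesis Hu : reduced_word y u.

Lemma red_take k : reduced_word (word_perm n (take k u)) (take k u).
Proof. apply: (@reduced_prefix n y _ (drop k u)); by rewrite cat_take_drop. Qed.

Lemma take_le k : bruhat_le (word_perm n (take k u)) (word_perm n (take k.+1 u)).
Proof.
exists (take k u), (take k.+1 u); split; try exact: red_take.
by rewrite -addn1 takeD prefix_subseq.
Qed.

Lemma take_le_y k : bruhat_le (word_perm n (take k u)) y.
Proof. exists (take k u), u; split => //; [exact: red_take | exact: take_subseq]. Qed.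

Lemma ninv_take k : ninv (word_perm n (take k u)) = minn k (size u).
Proof.
rewrite -(reduced_size (red_take k)) size_take /minn.
by case: ltnP.
Qed.

Lemma take_all : word_perm n (take (size u) u) = y.
Proof. by rewrite take_size; case: Hu => _ []. Qed.
End Prefix.

Lemma iso_length n (w v : 'S_n) :
  order_iso (@Bideal_le n w) (prod_le chain2_le (@Bideal_le n v)) ->
  ninv w = (ninv v).+1.
Proof.
move=> Hiso.
have Hstrict_v : forall p q : bool * Bideal v, prod_le chain2_le (@Bideal_le n v) p q ->
    p <> q -> (p.1 : nat) + ninv (proj1_sig p.2) < (q.1 : nat) + ninv (proj1_sig q.2).
  move=> [e z] [e' z'] [/= H1 H2] Hne.
  case: (eqVneq (proj1_sig z) (proj1_sig z')) => [E|E].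
    have Ez := bideal_val_inj E; subst z'.
    by move: H1 Hne; case: e; case: e' => //= _ [].
  have := bruhat_lt_inv H2 (elimN eqP E).
  by clear Hne; move: H1; case: e; case: e' => //=; lia.
have Hstrict_w : forall p q : Bideal w, Bideal_le p q -> p <> q ->
    ninv (proj1_sig p) < ninv (proj1_sig q).
  move=> p q H Hne; apply: bruhat_lt_inv H _ => E; apply: Hne; exact: bideal_val_inj.
apply/eqP; rewrite eqn_leq; apply/andP; split.
- have [u' Hu'] := exists_reduced w.
  case: Hiso => f [Hbij Hf].
  pose c k : Bideal w := exist _ (word_perm n (take k u')) (take_le_y Hu' k).
  have Hc : forall k, k < size u' -> Bideal_le (c k) (c k.+1) /\ c k <> c k.+1.
    move=> k Hk; split; first exact: (take_le Hu').
    move=> /(congr1 (@proj1_sig _ _)) /= /(congr1 (@ninv n)).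
    rewrite !(ninv_take Hu'); lia.
  have := iso_chain (iso_inj Hbij) (fun x y => iffLR (Hf x y)) Hstrict_v Hc.
  case: (f (c (size u'))) => e z /=.
  have := bruhat_le_inv (proj2_sig z); case => Hz _.
  rewrite (reduced_size Hu'); case: e => /=; lia.
- have [uv Huv] := exists_reduced v.
  case: (iso_sym Hiso) => g [Hbij Hg].
  pose p k : Bideal v := exist _ (word_perm n (take k uv)) (take_le_y Huv k).
  pose c k : bool * Bideal v := (size uv < k, p k).
  have Hc : forall k, k < (size uv).+1 ->
      prod_le chain2_le (@Bideal_le n v) (c k) (c k.+1) /\ c k <> c k.+1.
    move=> k Hk; split.
      split; last exact: (take_le Huv).
      by rewrite /c /chain2_le /=; apply/implyP; lia.
    case: (ltngtP k (size uv)) => Hk'.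
    + move=> /(congr1 snd) /(congr1 (@proj1_sig _ _)) /= /(congr1 (@ninv n)).
      rewrite !(ninv_take Huv); lia.
    + lia.
    + by rewrite /c Hk' ltnn ltnSn.
  have := iso_chain (iso_inj Hbij) (fun x y => iffLR (Hg x y)) Hstrict_w Hc.
  have := bruhat_le_inv (proj2_sig (g (c (size uv).+1))); case => Hz _.
  move: Hz; rewrite (reduced_size Huv); lia.
Qed.

Lemma part2 n (w v : 'S_n) :
  bruhat_lt v w -> (exists i, supp w i /\ ~ supp v i) ->
  order_iso (@Bideal_le n w) (prod_le chain2_le (@Bideal_le n v)) ->
  exists i : nat,
    (forall j, (supp w j /\ ~ supp v j) <-> j = i) /\
    exists u1 u2 : seq nat,
      reduced_word w (u1 ++ i :: u2) /\ reduced_word v (u1 ++ u2).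
Proof.
case=> Hne [u [u' [Hu Hu' Hs]]] [i0 [Hw0 Hv0]] Hiso.
have Hlen := iso_length Hiso.
have Hsz : size u' = (size u).+1 by rewrite (reduced_size Hu) (reduced_size Hu').
have [u1 [c [u2 [E1 E2]]]] := subseq_one Hs Hsz.
subst u u'.
have key : forall j, supp w j -> ~ supp v j -> j = c.
  move=> j Hwj Hvj.
  have := supp_in Hwj Hu'; rewrite !mem_cat inE => /orP [H|/orP [/eqP //|H]];
    by exfalso; apply: Hvj; exists (u1 ++ u2) => //; rewrite mem_cat H ?orbT.
have Ec := key _ Hw0 Hv0; subst i0.
exists c; split; last by exists u1, u2.
move=> j; split; first by case=> H1 H2; exact: key.
by move=> ->.
Qed.

Definition bleb n (x y : 'S_n) : bool := `[< bruhat_le x y >].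
Definition BI n (v : 'S_n) := {x : 'S_n | bleb x v}.
HB.instance Definition _ n (v : 'S_n) := Choice.on (BI v).
Definition BIle n (v : 'S_n) (x y : BI v) := bleb (val x) (val y).
Lemma BIrefl n (v : 'S_n) : reflexive (@BIle n v).
Proof. move=> x; apply/asboolP; exact: bruhat_le_refl. Qed.
Lemma BIanti n (v : 'S_n) : antisymmetric (@BIle n v).
Proof.
move=> x y /andP [/asboolP H1 /asboolP H2]; apply: val_inj.
exact: bruhat_le_antisym.
Qed.
Lemma BItrans n (v : 'S_n) : transitive (@BIle n v).
Proof. move=> y x z /asboolP H1 /asboolP H2; apply/asboolP; exact: bruhat_le_trans H1 H2. Qed.
Fact bdisp : Order.disp_t. Proof. exact: Order.Disp tt tt. Qed.
HB.instance Definition _ n (v : 'S_n) :=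
  Order.Le_isPOrder.Build bdisp (BI v) (@BIrefl n v) (@BIanti n v) (@BItrans n v).

Lemma prism_of n (w v : 'S_n) :
  order_iso (@Bideal_le n w) (prod_le chain2_le (@Bideal_le n v)) -> prism w.
Proof.
move=> Hiso.
exists _, bool, bdisp, (BI v); split => //.
apply: (iso_trans Hiso).
pose h (p : bool * Bideal v) : bool * BI v :=
  (p.1, exist _ (proj1_sig p.2) (asboolT (proj2_sig p.2))).
pose k (p : bool * BI v) : bool * Bideal v :=
  (p.1, exist _ (val p.2) (asboolW (valP p.2))).
exists h; split.
  exists k; case=> e z; congr pair => /=.
  - exact: bideal_val_inj.
  - exact: val_inj.
case=> e z [e' z']; rewrite /prod_le /=.
have -> : (e <= e')%O = (e ==> e') by case: e; case: e'.
split; case=> H1 H2; split => //.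
- by apply/asboolP.
- exact/asboolP.
Qed.

Import Order.Theory.

Section Forward.
Local Open Scope order_scope.
Variables (n : nat) (w : 'S_n) (d : Order.disp_t) (B : ctbDistrLatticeType d)
  (d' : Order.disp_t) (X : porderType d').
Hypothesis Hbt : (\bot : B) <> \top.
Variables (f : Bideal w -> B * X) (g : B * X -> Bideal w).
Hypotheses (fg : cancel f g) (gf : cancel g f).
Hypothesis Hf : forall x y, Bideal_le x y <->
  ((f x).1 <= (f y).1)%O /\ ((f x).2 <= (f y).2)%O.

Definition Wt : Bideal w := exist (fun x => bruhat_le x w) w (bruhat_le_refl w).
Definition E1 : Bideal w := exist (fun x => bruhat_le x w) 1%g (bruhat_le_1 w).

Lemma Hg p q : (p.1 <= q.1)%O /\ (p.2 <= q.2)%O <-> Bideal_le (g p) (g q).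
Proof. by rewrite Hf !gf. Qed.

Lemma topW p : (p.1 <= (f Wt).1)%O /\ (p.2 <= (f Wt).2)%O.
Proof. have := proj1 (Hf (g p) Wt) (proj2_sig (g p)); by rewrite gf. Qed.

Lemma botE p : ((f E1).1 <= p.1)%O /\ ((f E1).2 <= p.2)%O.
Proof. have := proj1 (Hf E1 (g p)) (bruhat_le_1 _); by rewrite gf. Qed.

Lemma fW1 : (f Wt).1 = \top.
Proof. apply: le_anti; rewrite lex1 /=; exact: (topW (\top, (f Wt).2)).1. Qed.

Lemma fE1 : (f E1).1 = \bot.
Proof. apply: le_anti; rewrite le0x andbT; exact: (botE (\bot, (f E1).2)).1. Qed.

Definition xT := (f Wt).2.
Definition xB := (f E1).2.

Definition atom (b : B) := b <> \bot /\ forall c, (c <= b)%O -> c = \bot \/ c = b.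

Lemma g_inj : injective g.
Proof. exact: can_inj gf. Qed.

Lemma atom_exists : exists b, atom b.
Proof.
suff : forall k c, c <> \bot -> ninv (proj1_sig (g (c, xB))) = k -> exists b, atom b.
  by move=> /(_ _ \top (nesym Hbt) erefl).
elim/ltn_ind => k IH c Hc Hk.
case: (classic (forall c', (c' <= c)%O -> c' = \bot \/ c' = c)) => H; first by exists c.
have [c' Hc'] := not_all_ex_not _ _ H.
have [Hle Hno] := imply_to_and _ _ Hc'.
have [Hn1 Hn2] := not_or_and _ _ Hno.
have Hlt : (ninv (proj1_sig (g (c', xB))) < k)%N.
  rewrite -Hk; apply: bruhat_lt_inv.
    by apply/Hg; split => //=.
  move=> /bideal_val_inj /g_inj [] //.
exact: IH Hlt _ Hn1 erefl.
Qed.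

Variable b : B.
Hypothesis Hb : atom b.
Definition nb := (~` b)%O.

Lemma L1 c : (c `&` b)%O = \bot \/ (c `&` b)%O = b.
Proof. apply: Hb.2; exact: leIr. Qed.

Lemma L2 c : c = ((c `&` b) `|` (c `&` nb))%O.
Proof. by rewrite -meetUr joinxC meetx1. Qed.

Lemma L3 c : (b <= c)%O -> (c `&` b)%O = b.
Proof. by move/meet_idPr. Qed.

Lemma L3' c : ~~ (b <= c)%O -> (c `&` b)%O = \bot.
Proof.
move=> H; case: (L1 c) => // E; move: H; by rewrite -E leIl.
Qed.

Lemma L4 : ~~ (b <= nb)%O.
Proof.
apply/negP => /meet_idPl E; apply: Hb.1; by rewrite -E meetxC.
Qed.

Lemma L5 c : (c <= nb)%O -> (c `&` b)%O = \bot.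
Proof.
move=> H; apply/eqP; rewrite -lex0 -(meetCx b).
exact: leI2.
Qed.

Lemma L6 c c' : (c <= c')%O <-> ((b <= c)%O -> (b <= c')%O) /\ (c `&` nb <= c' `&` nb)%O.
Proof.
split.
- move=> H; split; first by move=> H'; exact: le_trans H' H.
  exact: leI2.
- case=> H1 H2; rewrite (L2 c) leUx; apply/andP; split.
    case: (boolP (b <= c)%O) => Hbc.
      by rewrite L3 // H1.
    by rewrite L3' // le0x.
  exact: le_trans H2 (leIl _ _).
Qed.

Definition V : Bideal w := g (nb, xT).
Definition vv : 'S_n := proj1_sig V.
Lemma Hvw : bruhat_le vv w. Proof. exact: proj2_sig V. Qed.

Lemma PhiP x : bruhat_le (proj1_sig (g (((f x).1 `&` nb), (f x).2))) vv.
Proof.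
apply/(proj1 (Hg _ _)); split => /=; first exact: leIr.
exact: (topW (f x)).2.
Qed.

Definition Phi (x : Bideal w) : bool * Bideal vv :=
  ((b <= (f x).1), exist (fun y => bruhat_le y vv) _ (PhiP x)).

Definition iota (z : Bideal vv) : Bideal w :=
  exist (fun y => bruhat_le y w) (proj1_sig z) (bruhat_le_trans (proj2_sig z) Hvw).

Definition Psi (p : bool * Bideal vv) : Bideal w :=
  g (((if p.1 then b else \bot) `|` (f (iota p.2)).1), (f (iota p.2)).2).

Lemma iota_le z : (f (iota z)).1 <= nb.
Proof.
have := proj1 (Hf (iota z) V) (proj2_sig z); rewrite /V gf; by case.
Qed.

Lemma PhiK : cancel Phi Psi.
Proof.
move=> x; rewrite /Psi /Phi /=.
have -> : iota (exist (fun y => bruhat_le y vv) _ (PhiP x)) = g ((f x).1 `&` nb, (f x).2).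
  exact: bideal_val_inj.
rewrite gf /= -[RHS]fg; congr g.
case: (f x) => c x2 /=; congr pair.
case: (boolP (b <= c)) => H.
  by rewrite -{1}(L3 H) -L2.
by rewrite -(L3' H) -L2.
Qed.

Lemma PsiK : cancel Psi Phi.
Proof.
case=> e z; have Hc := iota_le z.
rewrite /Phi; congr pair.
  rewrite /Psi gf /=.
  case: e => /=; first exact: leUl.
  rewrite join0x; apply/negbTE/negP => H; move: L4; rewrite (le_trans H Hc) //.
apply: bideal_val_inj => /=; rewrite /Psi gf /=.
have -> : (((if e then b else \bot) `|` (f (iota z)).1) `&` nb) = (f (iota z)).1.
  rewrite meetUl (meet_idPl Hc).
  have -> : ((if e then b else \bot) `&` nb) = \bot.
    by case: e; [exact: meetxC | exact: meet0x].
  exact: join0x.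
have -> : ((f (iota z)).1, (f (iota z)).2) = f (iota z) by case: (f (iota z)).
by rewrite fg.
Qed.

Lemma Phi_le x y : Bideal_le x y <-> prod_le chain2_le (@Bideal_le n vv) (Phi x) (Phi y).
Proof.
rewrite Hf /prod_le /= /chain2_le.
have -> : Bideal_le (w:=vv) (exist (fun y0 => bruhat_le y0 vv) _ (PhiP x))
   (exist (fun y0 => bruhat_le y0 vv) _ (PhiP y)) <->
   Bideal_le (g ((f x).1 `&` nb, (f x).2)) (g ((f y).1 `&` nb, (f y).2)) by [].
rewrite -Hg /= L6.
split.
- by case=> [[H1 H2] H3]; split; [apply/implyP|split].
- by case=> /implyP H1 [H2 H3]; split.
Qed.

Lemma forward_concl : exists v : 'S_n,
     [/\ bruhat_lt v w,
         (forall i, supp v i -> supp w i) /\ (exists i, supp w i /\ ~ supp v i)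
       & order_iso (@Bideal_le n w) (prod_le chain2_le (@Bideal_le n v))].
Proof.
exists vv; split.
- split; last exact: Hvw.
  move=> E; have EV : V = Wt by apply: bideal_val_inj.
  have := congr1 (fun x => (f x).1) EV; rewrite /V gf /= fW1 => Enb.
  apply: Hb.1; by rewrite -(complK b) -/nb Enb compl1.
- split.
    move=> i /suppP [Hi Hle]; apply/suppP; split => //.
    exact: bruhat_le_trans Hle Hvw.
  pose a0 := g (b, xB).
  have Ha0 : proj1_sig a0 <> 1%g.
    move=> E; have : a0 = E1 by apply: bideal_val_inj.
    move=> /(congr1 (fun x => (f x).1)); rewrite /a0 gf fE1 /=; exact: Hb.1.
  have [u0 Hu0] := exists_reduced (proj1_sig a0).
  case: u0 Hu0 => [|i u0] Hu0.
    by case: Hu0 => _ [Hp _]; exfalso; apply: Ha0; rewrite -Hp wp_nil.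
  have Hsi : supp (proj1_sig a0) i by exists (i :: u0); rewrite ?inE ?eqxx.
  have [Hi Hle] := (iffLR (suppP _ _)) Hsi.
  pose Si : Bideal w := exist (fun y => bruhat_le y w) (stransp n i)
     (bruhat_le_trans Hle (proj2_sig a0)).
  have HSi : Bideal_le Si a0 by exact: Hle.
  have [H1 H2] := (iffLR (Hf _ _)) HSi; rewrite /a0 gf /= in H1 H2.
  have E2 : (f Si).2 = xB by apply: le_anti; rewrite H2 (botE (f Si)).2.
  have ESi : Si = a0.
    case: (Hb.2 _ H1) => E1'.
      have : Si = E1.
        rewrite -(fg Si) -(fg E1); congr g.
        by case: (f Si) E1' E2 => c x /= -> ->; rewrite /xB -fE1; case: (f E1).
      move=> /(congr1 (@proj1_sig _ _)) /= /(congr1 (@ninv n)).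
      by rewrite inv_stransp // ninv1.
    rewrite /a0 -(fg Si); congr g.
    by case: (f Si) E1' E2 => c x /= -> ->.
  exists i; split.
    apply/suppP; split => //; exact: (proj2_sig Si).
  move=> /suppP [_ Hv].
  have : Bideal_le Si V by exact: Hv.
  rewrite ESi /a0 /V => /(iffRL (Hg _ _)) [/= H _].
  by move: L4; rewrite H.
- exists Phi; split; last exact: Phi_le.
  exists Psi; [exact: PhiK | exact: PsiK].
Qed.
End Forward.

Lemma prism_forward n (w : 'S_n) : prism w -> exists v : 'S_n,
     [/\ bruhat_lt v w,
         (forall i, supp v i -> supp w i) /\ (exists i, supp w i /\ ~ supp v i)
       & order_iso (@Bideal_le n w) (prod_le chain2_le (@Bideal_le n v))].
Proof.
case=> d [B [d' [X [Hbt [f [[g fg gf] Hf]]]]]].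
have [b Hb] := atom_exists Hbt gf Hf.
exact: (forward_concl fg gf Hf Hb).
Qed.

Theorem lemma2p1 (n : nat) (w : 'S_n) :
  (prism w <->
   exists v : 'S_n,
     [/\ bruhat_lt v w,
         (forall i, supp v i -> supp w i) /\ (exists i, supp w i /\ ~ supp v i)
       & order_iso (@Bideal_le n w) (prod_le chain2_le (@Bideal_le n v))])
  /\
  (forall v : 'S_n,
     bruhat_lt v w ->
     (forall i, supp v i -> supp w i) -> (exists i, supp w i /\ ~ supp v i) ->
     order_iso (@Bideal_le n w) (prod_le chain2_le (@Bideal_le n v)) ->
     exists i : nat,
       (forall j, (supp w j /\ ~ supp v j) <-> j = i) /\
       exists u1 u2 : seq nat,
         reduced_word w (u1 ++ i :: u2) /\ reduced_word v (u1 ++ u2)).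
Proof.
split.
  split; first exact: prism_forward.
  by case=> v [_ _ Hiso]; exact: prism_of Hiso.
move=> v Hlt _ Hex Hiso; exact: part2 Hlt Hex Hiso.
Qed.
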